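(* Let $K$ be an algebraically closed field and let $m,m_1,m_2,r\ge0$ be integers with $r$ even and $m=m_1+m_2$. For each $k$, let $X_k$ denote the variety of skew-symmetric $k\times k$ matrices over $K$ of rank at most $r$. Then the map $X_m\to X_{m_1}\times X_{m_2}$ sending a matrix to its pair of diagonal blocks (the upper-left $m_1\times m_1$ block and the lower-right $m_2\times m_2$ block) is surjective. *)

(* Defs.v *)
From HB Require Import structures.
From mathcomp Require Import all_boot all_order all_algebra.
Set Implicit Arguments. Unset Strict Implicit. Unset Printing Implicit Defensive.
Import GRing.Theory.
Local Open Scope ring_scope.

(* Outside characteristic 2 the second condition follows from
   the first; in characteristic 2 it is the standard convention for
   skew-symmetric matrices (and makes all ranks even). *)
Definition skew (K : fieldType) (n : nat) (A : 'M[K]_n) : Prop :=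
  A^T = - A /\ (forall i : 'I_n, A i i = 0).

(* The variety X_k of skew-symmetric k x k matrices of rank at most r,
   described by its set of K-points (K algebraically closed). *)
Definition skew_rank_le (K : fieldType) (k r : nat) (A : 'M[K]_k) : Prop :=
  skew A /\ (\rank A <= r)%N.

(* Main.v *)
Require Import Defs.
From HB Require Import structures.
From mathcomp Require Import all_boot all_order all_algebra.
From mathcomp Require Import ring zify.
Local Open Scope ring_scope.
Import GRing.Theory.

Section Aux.
Variable K : fieldType.

Lemma rv_delta n (v : 'rV[K]_n) k : v *m delta_mx k (0 : 'I_1) = (v 0 k)%:M.
Proof.
rewrite -colE; apply/matrixP => x y; rewrite !ord1 !mxE /=. by [].
Qed.

Lemma outer_entry n (p q : 'rV[K]_n) k l : (p^T *m q) k l = p 0 k * q 0 l.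
Proof. by rewrite !mxE big_ord1 !mxE. Qed.

Lemma rank_sum_le n c s (F : nat -> 'M[K]_n) :
  (forall k, (\rank (F k) <= c)%N) -> (\rank (\sum_(0 <= k < s) F k)%R <= s * c)%N.
Proof.
move=> hF; elim: s => [|s IH]; first by rewrite big_geq // mxrank0.
rewrite big_nat_recr //= mulSn addnC.
apply: leq_trans; first exact: mxrank_add. by apply: leq_add.
Qed.

Lemma sum_block m1 m2 s (F1 F2 F3 F4 : nat -> 'M[K]_(_,_)) :
  \sum_(0 <= k < s) block_mx (F1 k : 'M_(m1,m1)) (F2 k : 'M_(m1,m2)) (F3 k : 'M_(m2,m1)) (F4 k : 'M_(m2,m2))
  = block_mx (\sum_(0 <= k < s) F1 k) (\sum_(0 <= k < s) F2 k)
             (\sum_(0 <= k < s) F3 k) (\sum_(0 <= k < s) F4 k).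
Proof.
elim: s => [|s IH]; first by rewrite !big_geq // block_mx0.
by rewrite !big_nat_recr //= IH add_block_mx.
Qed.

Lemma alt_decomp (s : nat) : forall n (A : 'M[K]_n), Defs.skew A -> (\rank A <= double s)%N ->
  exists u v : nat -> 'rV[K]_n,
    A = \sum_(0 <= k < s) ((u k)^T *m v k - (v k)^T *m u k).
Proof.
elim: s => [|s IH] n A [hT hd] hr.
  exists (fun _ => 0), (fun _ => 0); rewrite big_geq //.
  by apply/eqP; rewrite -mxrank_eq0 -leqn0.
have hA : forall k l, A l k = - A k l.
  by move=> k l; have := congr1 (fun M : 'M[K]_n => M k l) hT; rewrite !mxE.
case: (pickP (fun ij : 'I_n * 'I_n => A ij.1 ij.2 != 0)) => [[i j] /= hij|h0]; last first.
  exists (fun _ => 0), (fun _ => 0); rewrite big1 //; last first.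
    by move=> k _; rewrite trmx0 !mul0mx subr0.
  by apply/matrixP => k l; rewrite mxE; have := h0 (k, l); rewrite /= => /negbFE/eqP.
set a := A i j.
set p := row i A; set q := row j A.
set A' := A - a^-1 *: (p^T *m q - q^T *m p).
have hE : forall k l, A' k l = A k l - a^-1 * (A i k * A j l - A j k * A i l).
  by move=> k l; rewrite !mxE !big_ord1 !mxE.
have defA' : A' = A - a^-1 *: (p^T *m q - q^T *m p) by [].
clearbody A'.
have hsk : Defs.skew A'.
  split; last by move=> k; rewrite hE hd; ring.
  apply/matrixP => k l; rewrite !mxE !hE (hA k l).
  ring.
set N : 'M_n := 1%:M + a^-1 *: ((delta_mx 0 i : 'rV[K]_n)^T *m q - (delta_mx 0 j : 'rV[K]_n)^T *m p).
have hcol : forall t, A *m (delta_mx t (0:'I_1)) = - (row t A)^T.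
  move=> t; apply/matrixP => x y; rewrite ord1 -colE !mxE; exact: hA.
have hAN : A' = A *m N.
  rewrite defA' /N mulmxDr mulmx1 -scalemxAr mulmxBr !mulmxA !trmx_delta !hcol -/p -/q.
  by rewrite !mulNmx opprK -scalerN opprB; congr (_ + _); rewrite addrC.
have hrow0 : forall t, (t == i) || (t == j) -> row t A' = 0.
  move=> t /orP[]/eqP->; apply/matrixP => x y; rewrite !mxE hE.
    rewrite hd (hA i j) -/a; field; exact: hij.
  rewrite hd -/a; field; exact: hij.
have h2 : (2 <= \rank (A :&: kermx N))%N.
  apply: (@leq_trans (\rank (col_mx p q))); last first.
    apply: mxrankS; rewrite sub_capmx col_mx_sub !row_sub /=.
    apply/sub_kermxP; rewrite mul_col_mx -!row_mul -hAN !hrow0 ?eqxx ?orbT //.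
    by rewrite col_mx0.
  apply: (@mulmx1_min_rank K 2 (1 + 1) n (col_mx p q) (1%:M : 'M_(2, 1 + 1))
     (row_mx (a^-1 *: delta_mx j 0 : 'M_(n, 1)) (- a^-1 *: delta_mx i 0 : 'M_(n, 1)))).
  rewrite mul1mx (@mul_col_row _ 1 1 n 1 1 p q) -!scalemxAr !rv_delta !mxE -/a (hA i j) !hd (scalar_mx_block 1 1). rewrite !scale_scalar_mx -/a mulVf //. rewrite mulrNN mulVf // !mulr0 ?oppr0. by rewrite !raddf0.
have hr' : (\rank A' <= double s)%N.
  have := mxrank_mul_ker A N; rewrite -hAN => e.
  move: hr; rewrite -e doubleS; lia.
have [u' [v' hd']] := IH n A' hsk hr'.
exists (fun k => if k is k'.+1 then u' k' else a^-1 *: p).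
exists (fun k => if k is k'.+1 then v' k' else q).
rewrite big_nat_recl //= -hd' defA'.
have -> : (a^-1 *: p)^T = a^-1 *: p^T by apply/matrixP => x y; rewrite !mxE.
rewrite -scalemxAl -scalemxAr -scalerBr.
by rewrite addrC subrK.
Qed.

End Aux.

Theorem lemma4p4 (K : closedFieldType) (m1 m2 r : nat) (hr : ~~ odd r)
  (A1 : 'M[K]_m1) (A2 : 'M[K]_m2) :
  skew_rank_le r A1 -> skew_rank_le r A2 ->
  exists A : 'M[K]_(m1 + m2),
    skew_rank_le r A /\ ulsubmx A = A1 /\ drsubmx A = A2.
Proof.
move=> [s1 r1] [s2 r2].
rewrite -(even_halfK hr) in r1 r2.
have [u1 [v1 e1]] := @alt_decomp K _ _ A1 s1 r1.
have [u2 [v2 e2]] := @alt_decomp K _ _ A2 s2 r2.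
pose w k := row_mx (u1 k) (u2 k).
pose z k := row_mx (v1 k) (v2 k).
pose A := \sum_(0 <= k < r./2) ((w k)^T *m z k - (z k)^T *m w k).
have hb : A = block_mx A1
   (\sum_(0 <= k < r./2) ((u1 k)^T *m v2 k - (v1 k)^T *m u2 k))
   (\sum_(0 <= k < r./2) ((u2 k)^T *m v1 k - (v2 k)^T *m u1 k)) A2.
  rewrite e1 e2 -sum_block; apply: eq_bigr => k _.
  by rewrite /w /z !tr_row_mx !mul_col_row opp_block_mx add_block_mx.
exists A; split; last by rewrite hb block_mxKul block_mxKdr.
split; first split.
- rewrite /A raddf_sum -sumrN; apply: eq_bigr => k _.
  by rewrite raddfB /= !trmx_mul !trmxK opprB.
- move=> i; rewrite /A summxE big1 // => k _; rewrite !mxE.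
  by rewrite !big_ord1 !mxE mulrC subrr.
- rewrite -{1}(even_halfK hr) -muln2.
  apply: rank_sum_le => k.
  apply: leq_trans (mxrank_add _ _) _; rewrite mxrank_opp.
  rewrite -[2%N]/(1 + 1)%N; by apply: leq_add; apply: leq_trans (mxrankM_maxl _ _) (rank_leq_col _).
Qed.
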